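(* Let $\mathcal{G}$ be a $k$-uniform hypergraph with $n$ vertices. Then \[ {\rm bw}(\mathcal{G}) \geq\frac{n+(-1)^n}{k(n+1)}\sum_{j = 1}^n \alpha _j(\mathcal{G}). \]
   Context: A $k$-uniform hypergraph $\mathcal{G}$ has vertex set $V(\mathcal{G})=[n]$ and edge set $E(\mathcal{G})$ of $k$-element subsets of $V(\mathcal{G})$. For $\mathbf{x}\in\mathbb{R}^n$, $\mathcal{L}_\mathcal{G}\mathbf{x}^k=\sum_{\{i_1,\ldots,i_k\}\in E(\mathcal{G})}\left(x_{i_1}^k+\cdots+x_{i_k}^k-k\,x_{i_1}\cdots x_{i_k}\right)$. The inverse Perron value of vertex $j$ is $\alpha_j(\mathcal{G})=\min\{\mathcal{L}_\mathcal{G}\mathbf{x}^k : \mathbf{x}\in\mathbb{R}^n_+,\ \sum_{i=1}^n x_i^k=1,\ x_j=0\}$ ($\mathbb{R}^n_+$ = nonnegative vectors). For $S\subseteq V(\mathcal{G})$ with complement $\overline{S}=V(\mathcal{G})\setminus S$, $E(S,\overline{S})$ is the set of edges containing vertices of both $S$ and $\overline{S}$. The bipartition width is ${\rm bw}(\mathcal{G})=\min\{|E(S,\overline{S})| : S\subseteq V(\mathcal{G}),\ |S|=\lfloor n/2\rfloor\}$. *)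

(* Defs.v *)
From HB Require Import structures.
From mathcomp Require Import all_boot all_order all_algebra.
From mathcomp Require Import classical_sets reals.
Set Implicit Arguments. Unset Strict Implicit. Unset Printing Implicit Defensive.
Import Order.TTheory GRing.Theory Num.Theory.
Local Open Scope ring_scope.
Local Open Scope classical_set_scope.

Definition uniform (n k : nat) (E : {set {set 'I_n}}) : Prop :=
  forall e, e \in E -> #|e| = k.

Definition lapk (R : realType) (n k : nat) (E : {set {set 'I_n}})
    (x : 'I_n -> R) : R :=
  \sum_(e in E) (\sum_(i in e) x i ^+ k - k%:R * \prod_(i in e) x i).

(* inverse Perron value alpha_j: min (realized as inf) of L x^k over
   nonnegative x with sum x_i^k = 1 and x_j = 0 *)
Definition alpha (R : realType) (n k : nat) (E : {set {set 'I_n}}) (j : 'I_n) : R :=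
  inf [set lapk k E x | x in
        [set x : 'I_n -> R | (forall i, 0 <= x i) /\
                              \sum_(i < n) x i ^+ k = 1 /\ x j = 0]].

Definition cut (n : nat) (E : {set {set 'I_n}}) (S : {set 'I_n}) : {set {set 'I_n}} :=
  [set e in E | (e :&: S != finset.set0) && (e :&: ~: S != finset.set0)].

(* bipartition width: min over |S| = floor(n/2) of |E(S,S-bar)|.
   The default #|E| is an upper bound of every cut, so this is the true min. *)
Definition bw (n : nat) (E : {set {set 'I_n}}) : nat :=
  \big[minn/#|E|]_(S : {set 'I_n} | #|S| == n./2) #|cut E S|.

(* Main.v *)
Require Import Defs.
From HB Require Import structures.
From mathcomp Require Import all_boot all_order all_algebra.
From mathcomp Require Import classical_sets reals.
From mathcomp Require Import ring lra zify.
Import Order.TTheory GRing.Theory Num.Theory.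
Local Open Scope ring_scope.

Lemma kroot (R : rcfType) (k : nat) (a : R) : (0 < k)%N -> 0 <= a -> a <= 1 ->
  exists2 c : R, 0 <= c & c ^+ k = a.
Proof.
move=> k0 a0 a1.
have [|c /andP[c0 _] rc] := @poly_ivt R ('X^k - a%:P) 0 1 ler01.
  by rewrite !hornerE expr0n eqn0Ngt k0 /= expr1n sub0r oppr_le0 a0 subr_ge0 a1.
by exists c => //; move: rc; rewrite rootE !hornerE subr_eq0 => /eqP.
Qed.

Definition ind (R : realType) n (T : {set 'I_n}) (c : R) : 'I_n -> R :=
  fun i => if i \in T then c else 0.
Arguments ind {R n}.

Lemma lapk_ind (R : realType) n k (E : {set {set 'I_n}}) (T : {set 'I_n}) (c : R) :
  (0 < k)%N -> uniform k E ->
  lapk k E (ind T c) = c ^+ k * \sum_(e in cut E T) #|e :&: T|%:R.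
Proof.
move=> k0 uE; rewrite /lapk big_distrr /= /cut.
rewrite [RHS]big_mkcond [LHS]big_mkcond /=; apply: eq_bigr => e _.
rewrite inE; case eE: (e \in E) => //=.
have sx : \sum_(i in e) ind T c i ^+ k = c ^+ k * #|e :&: T|%:R.
  rewrite (bigID (mem T)) /= [X in _ + X]big1 ?addr0; last first.
    by move=> i /andP[_ /negbTE]; rewrite /ind => ->; rewrite expr0n eqn0Ngt k0.
  rewrite (eq_bigr (fun=> c ^+ k)); last by move=> i /andP[_]; rewrite /ind => ->.
  rewrite (eq_bigl (mem (e :&: T))) ?sumr_const ?mulr_natr //.
  by move=> i; rewrite !inE.
case: (boolP (e \subset T)) => eT.
  have -> : \prod_(i in e) ind T c i = c ^+ k.
    rewrite (eq_bigr (fun=> c)); last by move=> i ie; rewrite /ind (fintype.subsetP eT).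
    by rewrite prodr_const uE.
  rewrite -finset.setDE finset.setD_eq0 eT andbF sx (finset.setIidPl eT) uE //.
  by rewrite mulrC subrr.
have [i ie iT] := fintype.subsetPn eT.
rewrite [\prod_(_ in e) _](bigD1 i) //=.
have -> : ind T c i = 0 by rewrite /ind (negbTE iT).
rewrite mul0r mulr0 subr0 sx.
rewrite -finset.setDE finset.setD_eq0 (negbTE eT) andbT.
by case: eqP => [->|_] /=; rewrite ?cards0 ?mulr0.
Qed.

Lemma hlb (R : realType) n k E (j : 'I_n) : (0 < k)%N ->
  has_lbound [set lapk k E x | x in [set x : 'I_n -> R | (forall i, 0 <= x i) /\
                              \sum_(i < n) x i ^+ k = 1 /\ x j = 0]].
Proof.
move=> k0; exists (- (k * #|E|)%:R) => _ [x [x0 [x1 _]] <-].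
have xle1 i : x i <= 1.
  rewrite leNgt; apply/negP => xi1.
  have : 1 < x i ^+ k by rewrite expr_gt1.
  rewrite ltNge => /negP; apply; rewrite -x1 (bigD1 i) //= lerDl.
  by apply: sumr_ge0 => l _; exact: exprn_ge0.
have -> : - (k * #|E|)%:R = \sum_(e in E) (- (k%:R : R)).
  by rewrite sumr_const mulNrn natrM mulr_natr.
apply: ler_sum => e _.
rewrite -[X in X <= _]add0r lerD //; first by apply: sumr_ge0 => i _; exact: exprn_ge0.
rewrite lerN2 ger_pMr ?ltr0n //.
by apply: prodr_ile1 => i _; rewrite x0 xle1.
Qed.

Lemma alpha_le (R : realType) n k E (T : {set 'I_n}) (j : 'I_n) (c : R) :
  (0 < k)%N -> uniform k E -> j \notin T -> 0 <= c -> c ^+ k * #|T|%:R = 1 ->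
  alpha R k E j <= c ^+ k * \sum_(e in cut E T) #|e :&: T|%:R.
Proof.
move=> k0 uE jT c0 cT; rewrite -lapk_ind //.
rewrite /alpha; apply: (ge_inf (hlb _ _ _ _ _ k0)).
exists (ind T c) => //; split; [|split].
- by move=> i; rewrite /ind; case: ifP.
- rewrite (bigID (mem T)) /= [X in _ + X]big1 ?addr0; last first.
    by move=> i /negbTE; rewrite /ind => ->; rewrite expr0n eqn0Ngt k0.
  rewrite (eq_bigr (fun=> c ^+ k)); last by move=> i; rewrite /ind => ->.
  by rewrite sumr_const -mulr_natr.
- by rewrite /ind (negbTE jT).
Qed.
Lemma final (R : realType) (o : bool) (k a b N s A B C : R) :
  0 < k -> 0 < a -> 0 <= A -> 0 <= B -> A + B = k * C ->
  N = o%:R + 2 * a -> b = o%:R + a -> s = (-1) ^+ o ->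
  (N + s) / (k * (N + 1)) * (a * (B / b) + b * (A / a)) <= C.
Proof.
move=> k0 a0 A0 B0 hC -> -> ->.
have -> : C = (A + B) / k by rewrite hC mulrAC divff ?mul1r // gt_eqF.
have k1 : k != 0 by rewrite gt_eqF.
have a1 : a != 0 by rewrite gt_eqF.
case: o => /=.
  have a2 : 1%:R + a != 0 by (rewrite gt_eqF //; lra).
  have a3 : 1%:R + 2 * a + 1 != 0 by (rewrite gt_eqF //; lra).
  set q := a / (1%:R + a).
  have q0 : 0 <= q by (rewrite divr_ge0 //; lra).
  have q1 : q <= 1 by (rewrite ler_pdivrMr ?mul1r; lra).
  have -> : (1%:R + 2 * a + (-1) ^+ 1) / (k * (1%:R + 2 * a + 1)) *
      (a * (B / (1%:R + a)) + (1%:R + a) * (A / a)) = (A + B * q ^+ 2) / k.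
    rewrite /q; field; by rewrite ?a1 ?k1 ?a2 ?a3.
  by rewrite ler_pM2r ?invr_gt0 // lerD2l -[leRHS]mulr1 ler_wpM2l // exprn_ile1.
have a4 : 0%:R + 2 * a + 1 != 0 by (rewrite gt_eqF //; lra).
rewrite le_eqVlt; apply/orP; left; apply/eqP.
field; rewrite k1 a1 /=; rewrite add0r in a4; exact: a4.
Qed.

Lemma cutC n (E : {set {set 'I_n}}) (S : {set 'I_n}) : cut E (~: S) = cut E S.
Proof. by apply/setP => e; rewrite !inE finset.setCK [X in _ && X]andbC. Qed.

Lemma alpha_le2 (R : realType) n k E (T : {set 'I_n}) (j : 'I_n) :
  (0 < k)%N -> uniform k E -> j \notin T -> (0 < #|T|)%N ->
  alpha R k E j <= (#|T|%:R)^-1 * \sum_(e in cut E T) #|e :&: T|%:R.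
Proof.
move=> k0 uE jT T0.
have [||c c0 ck] := @kroot R k (#|T|%:R)^-1 k0.
- by rewrite invr_ge0 ler0n.
- by rewrite invf_le1 ?ltr0n // ler1n.
rewrite -ck; apply: alpha_le => //.
by rewrite ck mulVf // pnatr_eq0 -lt0n.
Qed.

Theorem theorem3p2 (R : realType) (n k : nat) (E : {set {set 'I_n}}) :
  uniform k E ->
  (bw E)%:R >= (n%:R + (-1) ^+ n) / (k%:R * (n%:R + 1)) * \sum_(j < n) alpha R k E j.
Proof.
move=> uE.
have [->|k0] := posnP k.
  by rewrite mul0r invr0 mulr0 mul0r ler0n.
set F := \sum_(j < n) alpha R k E j.
set f := (n%:R + _) / _.
suff key : forall S : {set 'I_n}, #|S| = n./2 -> f * F <= #|cut E S|%:R.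
  have [s [us ss _]] : exists s : seq 'I_n, [/\ uniq s, size s = n./2 & {subset s <= 'I_n}].
    by apply/card_geqP; rewrite card_ord leq_half_double ltnW // ltnS -addnn leq_addr.
  have S0 : #|[set x in s]| = n./2 by rewrite cardsE (card_uniqP us) ss.
  rewrite /bw; apply: (big_ind (fun m : nat => f * F <= m%:R)).
  - apply: le_trans (key _ S0) _; rewrite ler_nat; apply: subset_leq_card.
    by apply/fintype.subsetP => e; rewrite inE => /andP[].
  - by move=> a b ha hb; rewrite /minn; case: ifP.
  - by move=> S /eqP; exact: key.
move=> S hS.
have [n0|[n1|n2]] : n = 0%N \/ n = 1%N \/ (1 < n)%N by case: n {E uE F f S hS} => [|[|n]]; auto.
- subst n; rewrite /F big_ord0 mulr0 ler0n //.
- subst n; rewrite /f expr1 mulr1n addrN !mul0r ler0n //.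
have hb : #|~: S| = (odd n + #|S|)%N.
  have := cardsC S; rewrite card_ord hS => h.
  have := odd_double_half n; rewrite -addnn; lia.
have a0 : (0 < #|S|)%N by rewrite hS; case: n n2 {E uE F f S hS hb} => [|[|n]].
have b0 : (0 < #|~: S|)%N by rewrite hb addn_gt0 a0 orbT.
set A := \sum_(e in cut E S) (#|e :&: S|%:R : R).
set B := \sum_(e in cut E S) (#|e :&: ~: S|%:R : R).
have hF : F <= #|S|%:R * (B / #|~: S|%:R) + #|~: S|%:R * (A / #|S|%:R).
  rewrite /F (bigID (mem S)) /=; apply: lerD.
    apply: le_trans (ler_sum _ (fun j (_ : j \in S) => _ : alpha R k E j <= B / #|~: S|%:R)) _.
      move=> j jS; rewrite mulrC /B -(cutC _ E S); apply: alpha_le2 => //.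
      by rewrite inE negbK.
    by rewrite sumr_const mulr_natl.
  apply: le_trans (ler_sum _ (fun j (_ : j \notin S) => _ : alpha R k E j <= A / #|S|%:R)) _.
    by move=> j jS; rewrite mulrC /A; apply: alpha_le2.
  rewrite (eq_bigl (fun j => j \in ~: S)) ?sumr_const ?mulr_natl //.
  by move=> j; rewrite inE.
have hAB : A + B = k%:R * #|cut E S|%:R.
  rewrite /A /B -big_split /= mulr_natr -(sumr_const (mem (cut E S))).
  apply: eq_bigr => e; rewrite inE => /andP[eE _].
  by rewrite -natrD -finset.setDE cardsID uE.
apply: le_trans (ler_wpM2l _ hF) _.
  have sg : -1 <= (-1) ^+ n :> R.
    by rewrite -signr_odd; case: (odd n) => /=; rewrite ?expr1 ?expr0 //; lra.
  have n1 : 1 <= n%:R :> R by rewrite ler1n ltnW.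
  rewrite /f divr_ge0 //; [lra | rewrite mulr_ge0 //; lra].
apply: (@final R (odd n)) => //.
- by rewrite ltr0n.
- by rewrite ltr0n.
- by apply: sumr_ge0.
- by apply: sumr_ge0.
- by rewrite -{1}(odd_double_half n) natrD -muln2 natrM hS mulrC.
- by rewrite hb natrD.
- by rewrite signr_odd.
Qed.
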